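(* There exist absolute constants $c>0$ and $\delta_0>0$ such that the following holds: if $\delta\in(0,\delta_0]$, $r\in\mathbb{N}$, and $q$ is a univariate sum-of-squares polynomial of degree $r$ with $\|(1-x^2)-q\|_{1,\mathrm{cheb}}\le\delta$, then $r\ge c/\sqrt\delta$. That is, $r=\Omega(1/\sqrt\delta)$.
   Context: $T_k(x)=\cos(k\arccos x)$ is the Chebyshev polynomial of the first kind; for a univariate polynomial $p=\sum_kc_kT_k$, $\|p\|_{1,\mathrm{cheb}}=\sum_k|c_k|$. *)

(* Defs.v *)
From HB Require Import structures.
From mathcomp Require Import all_boot all_order all_algebra.
From mathcomp Require Import Rstruct.
From Stdlib Require Import Reals.
Set Implicit Arguments. Unset Strict Implicit. Unset Printing Implicit Defensive.
Import Order.TTheory GRing.Theory Num.Theory.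
Local Open Scope ring_scope.

(* Chebyshev polynomials of the first kind: T_0 = 1, T_1 = X,
   T_{k+2} = 2 X T_{k+1} - T_k  (so that T_k(cos t) = cos (k t)). *)
Fixpoint chebT_aux (k : nat) : {poly R} * {poly R} :=
  match k with
  | 0%N => (1, 'X)
  | k'.+1 => let: (a, b) := chebT_aux k' in (b, 2%:R *: 'X * b - a)
  end.
Definition chebT (k : nat) : {poly R} := (chebT_aux k).1.

(* Since (T_k) is a basis of R[x], the expansion is unique (up to trailing zeros),
   so this says exactly ||p||_{1,cheb} <= d. *)
Definition cheb1_norm_le (p : {poly R}) (d : R) : Prop :=
  exists (n : nat) (c : nat -> R),
    p = \sum_(k < n) c k *: chebT k /\ \sum_(k < n) `|c k| <= d.

Definition is_sos (q : {poly R}) : Prop :=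
  exists s : seq {poly R}, q = \sum_(p <- s) p ^+ 2.

(* Main.v *)
Require Import Defs.
From HB Require Import structures.
From mathcomp Require Import all_boot all_order all_algebra.
From mathcomp Require Import Rstruct.
From Stdlib Require Import Reals.
From mathcomp Require Import ring lra zify.
Import Order.TTheory GRing.Theory Num.Theory.
Local Open Scope ring_scope.

Lemma aux_step (k : nat) : chebT_aux k.+1 = ((chebT_aux k).2, 2%:R *: 'X * (chebT_aux k).2 - (chebT_aux k).1).
Proof. by rewrite /=; case: (chebT_aux k). Qed.

Lemma aux_step1 (k : nat) : (chebT_aux k.+1).1 = (chebT_aux k).2.
Proof. by rewrite aux_step. Qed.
Lemma aux_step2 (k : nat) : (chebT_aux k.+1).2 = 2%:R *: 'X * (chebT_aux k).2 - (chebT_aux k).1.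
Proof. by rewrite aux_step. Qed.

Lemma aux_coef (k : nat) :
  (forall j : nat, (k < j)%nat -> ((chebT_aux k).1)`_j = 0) /\ 0 < ((chebT_aux k).1)`_k /\
  (forall j : nat, (k.+1 < j)%nat -> ((chebT_aux k).2)`_j = 0) /\ 0 < ((chebT_aux k).2)`_k.+1.
Proof.
elim: k => [|k [H1 [H2 [H3 H4]]]].
  rewrite /=; split; first by case=> [|j] //= _; rewrite coefC.
  split; first by rewrite coefC /=; lra.
  split; first by case=> [|[|j]] //= _; rewrite coefX.
  by rewrite coefX /=; lra.
rewrite aux_step /=; split; first by []. split; first by [].
split.
  move=> j Hj; rewrite coefB -scalerAl coefZ coefXM.
  case: j Hj => [|j] // Hj /=; rewrite H3 ?H1 //; [rewrite mulr0 subr0 //|]; by apply: ltn_trans Hj.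
rewrite coefB -scalerAl coefZ coefXM /= H1; first by rewrite subr0 mulr_gt0 // ltr0n.
exact: leqnSn.
Qed.

Lemma cheb_coef_hi (k j : nat) : (k < j)%nat -> (chebT k)`_j = 0.
Proof. by case: (aux_coef k) => H _; apply: H. Qed.
Lemma cheb_coef_top (k : nat) : (chebT k)`_k != 0.
Proof. by case: (aux_coef k) => _ [H _]; rewrite gt_eqF. Qed.

Lemma cheb_uniq (e : {poly R}) (m n : nat) (c : nat -> R) :
  (forall j : nat, (m < j)%nat -> e`_j = 0) ->
  e = \sum_(k < n) c k *: chebT k -> forall k : nat, (m < k)%nat -> (k < n)%nat -> c k = 0.
Proof.
move=> He; elim: n e He => [|n IH] e He Hs k Hmk Hkn //.
have Hcn : c n = 0.
  case: (leqP n m) => Hnm; first by exfalso; move: Hkn Hmk Hnm; lia.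
  have := He n Hnm; rewrite Hs big_ord_recr /= coefD coefZ coef_sum big1.
    by rewrite add0r => /eqP; rewrite mulf_eq0 (negbTE (cheb_coef_top n)) orbF => /eqP.
  by move=> i _; rewrite coefZ cheb_coef_hi ?mulr0.
rewrite ltnS leq_eqVlt in Hkn; case/orP: Hkn => [/eqP -> //|Hkn].
have He' : forall j : nat, (m < j)%nat -> (\sum_(k < n) c k *: chebT k)`_j = 0.
  by move=> j Hj; have := He j Hj; rewrite Hs big_ord_recr /= Hcn scale0r addr0.
exact: (IH _ He' erefl).
Qed.

Lemma eval_inv (h : R) (k : nat) (K : R) : 0 <= h -> K = k%:R ->
  2 * h * (K + 1) * (K + 2) <= 1 ->
  1 <= (chebT_aux k).1.[1 + h] /\
  0 <= (chebT_aux k).2.[1 + h] - (chebT_aux k).1.[1 + h] /\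
  (chebT_aux k).2.[1 + h] - (chebT_aux k).1.[1 + h] <= 4 * h * (K + 1) /\
  (chebT_aux k).2.[1 + h] <= 1 + 2 * h * (K + 1) * (K + 2).
Proof.
move=> h0; elim: k K => [|k IH] K HK Hc.
  rewrite HK in Hc *; rewrite /= !hornerE; move: Hc; rewrite !add0r => Hc; (repeat split); lra.
have K0 : 1 <= K by rewrite HK -natr1 lerDr ler0n.
have HK' : K - 1 = k%:R by rewrite HK -natr1 addrK.
have hK : 0 <= h * (K - 1) by rewrite mulr_ge0 // subr_ge0.
have Hc' : 2 * h * (K - 1 + 1) * (K - 1 + 2) <= 1.
  have E : 2 * h * (K - 1 + 1) * (K - 1 + 2) = 2 * h * (K + 1) * (K + 2) - 4 * (h * (K - 1)) - 8 * h by ring.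
  lra.
case: (IH _ HK' Hc') => [A [B [C D]]].
set a := (chebT_aux k).1.[1 + h] in A B C D *.
set b := (chebT_aux k).2.[1 + h] in A B C D *.
have ev1 : (chebT_aux k.+1).1.[1 + h] = b by rewrite aux_step1.
have ev2 : (chebT_aux k.+1).2.[1 + h] = 2 * (1 + h) * b - a.
  by rewrite aux_step2 !hornerE.
rewrite ev1 ev2.
have b2 : b <= 2 by lra.
have hb : h * b <= h * 2 by rewrite ler_wpM2l.
have hb0 : 0 <= h * b by rewrite mulr_ge0 //; lra.
have E1 : 2 * (1 + h) * b - a - b = b - a + 2 * (h * b) by ring.
have E2 : 4 * h * (K + 1) = 4 * h * (K - 1 + 1) + 4 * h by ring.
have E3 : 2 * h * (K + 1) * (K + 2) = 2 * h * (K - 1 + 1) * (K - 1 + 2) + 4 * h * (K - 1 + 1) + 4 * h by ring.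
split; first lra.
split; first lra.
split; lra.
Qed.

Lemma Tbound (h : R) (m k : nat) : h = 1 / (2 * (m%:R + 1) ^+ 2) -> (k <= m)%nat ->
  `|(chebT k).[1 + h]| <= 2.
Proof.
move=> Hh Hk.
have M0 : 0 <= m%:R :> R by rewrite ler0n.
have h0 : 0 <= h by rewrite Hh divr_ge0 // mulr_ge0 // exprn_ge0 //; lra.
case: k Hk => [|j] Hj.
  rewrite /chebT /= hornerE normr1; lra.
have J1 : j.+1%:R <= m%:R :> R by rewrite ler_nat.
rewrite -natr1 in J1.
have J0 : 0 <= j%:R :> R by rewrite ler0n.
have Hm : 2 * h * (m%:R + 1) ^+ 2 = 1.
  have N0 : m%:R + 1 != 0 :> R by rewrite gt_eqF //; lra.
  rewrite Hh; field; rewrite ?N0 ?expf_neq0 //.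
have Hc : 2 * h * (j%:R + 1) * (j%:R + 2) <= 1.
  have P : (j%:R + 1) * (j%:R + 2) <= (m%:R + 1) ^+ 2 :> R by rewrite expr2; nra.
  have h2 : 0 <= 2 * h by lra.
  have Q := ler_wpM2l h2 P.
  lra.
case: (@eval_inv h j (j%:R) h0 erefl Hc) => [A [B [C D]]].
rewrite /chebT aux_step1 ger0_norm; last lra.
have : 2 * h * (j%:R + 1) * (j%:R + 2) <= 1 := Hc.
lra.
Qed.

Lemma sos_nonneg (q : {poly R}) (x : R) : is_sos q -> 0 <= q.[x].
Proof.
case=> s ->; rewrite horner_sum; apply: sumr_ge0 => p _.
by rewrite horner_exp sqr_ge0.
Qed.

Theorem theorem10 :
  exists (c delta0 : R), 0 < c /\ 0 < delta0 /\
    forall (delta : R) (r : nat) (q : {poly R}),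
      0 < delta -> delta <= delta0 ->
      is_sos q -> (size q).-1 = r ->
      cheb1_norm_le ((1 - 'X ^+ 2) - q) delta ->
      c / Num.sqrt delta <= r%:R.
Proof.
exists (1/3), (1/20); split; first lra; split; first lra.
move=> delta r q d0 d1 Hsos Hr [n [c [He Hsum]]].
pose m := maxn r 2.
have Hco : forall j : nat, (m < j)%nat -> ((1 - 'X ^+ 2) - q)`_j = 0.
  move=> j Hj; rewrite !coefB coef1 coefXn.
  have -> : q`_j = 0.
    apply: nth_default.
    have : (size q <= (size q).-1.+1)%nat by case: (size q).
    rewrite Hr /m; move: Hj; rewrite /m => A B.
    apply: leq_trans B _; lia.
  have -> : (j == 0%nat) = false by apply/eqP; move: Hj; rewrite /m; lia.
  have -> : (j == 2%nat) = false by apply/eqP; move: Hj; rewrite /m; lia.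
  by rewrite !subr0.
have Hc0 := @cheb_uniq _ m n c Hco He.
pose h := 1 / (2 * ((m%:R : R) + 1) ^+ 2).
have M0 : 0 <= m%:R :> R by rewrite ler0n.
have h0 : 0 < h.
  rewrite /h divr_gt0 //; apply: mulr_gt0; first lra.
  by apply: exprn_gt0; lra.
have Hm : 2 * h * (m%:R + 1) ^+ 2 = 1.
  have N0 : m%:R + 1 != 0 :> R by rewrite gt_eqF //; lra.
  rewrite /h; field; rewrite ?N0 ?expf_neq0 //.
have qpos := @sos_nonneg q (1 + h) Hsos.
have eb : `|((1 - 'X ^+ 2) - q).[1 + h]| <= 2 * delta.
  rewrite He horner_sum; apply: le_trans (ler_norm_sum _ _ _) _.
  apply: (@le_trans _ _ (\sum_(k < n) 2 * `|c k|)); last first.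
    by rewrite -mulr_sumr ler_wpM2l.
  apply: ler_sum => k _; rewrite hornerZ normrM.
  case: (leqP k m) => Hk.
    by rewrite mulrC ler_wpM2r // (@Tbound h m k).
  by rewrite (Hc0 k Hk (ltn_ord k)) normr0 !mul0r mulr0.
have ev : ((1 - 'X ^+ 2) - q).[1 + h] = 1 - (1 + h) ^+ 2 - q.[1 + h].
  by rewrite !hornerE.
rewrite ev in eb.
have hd : h <= delta.
  move: eb; rewrite ler_norml => /andP [H1 H2].
  have E : (1 + h) ^+ 2 = 1 + 2 * h + h * h by rewrite expr2; ring.
  have hh : 0 <= h * h by rewrite mulr_ge0 // ltW.
  rewrite E in H1; lra.
have key : 1 <= 2 * delta * (m%:R + 1) ^+ 2.
  have X0 : 0 <= (m%:R + 1) ^+ 2 :> R by rewrite exprn_ge0 //; lra.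
  have := ler_wpM2r X0 hd; lra.
case: (leqP 2 r) => Hr2; last first.
  have : m = 2%nat by rewrite /m; lia.
  move=> Em; rewrite Em in key; move: key; rewrite expr2; lra.
have Em : m = r by rewrite /m; lia.
rewrite Em in key.
have R2 : 2 <= r%:R :> R by rewrite (ler_nat R 2 r).
have sd0 : 0 < Num.sqrt delta by rewrite sqrtr_gt0.
have sd2 : Num.sqrt delta ^+ 2 = delta by rewrite sqr_sqrtr // ltW.
rewrite ler_pdivrMr //.
set t := r%:R * Num.sqrt delta.
have t0 : 0 <= t by rewrite /t mulr_ge0 //; lra.
have tt : t ^+ 2 = r%:R ^+ 2 * delta by rewrite /t exprMn sd2.
have key2 : 1 <= 9 * t ^+ 2.
  rewrite tt; move: key; rewrite !expr2; nra.
rewrite expr2 in key2; nra.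
Qed.
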